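(* Let $K\colon\mathbb{E}(D)\to\mathbb{E}(D)$ be an affine function and let $u\colon D\to[0,\infty)$ be a prefixed point of $K$, i.e. $K(u)\le u$. If $\mathsf{D}K$ has a $u$-ranking supermartingale, then the restriction $K_{\le u}\colon\mathbb{E}_{\le u}(D)\to\mathbb{E}_{\le u}(D)$ of $K$ has a unique fixed point.
   Context: $\mathbb{E}(D)$ is the set of functions $D\to[0,\infty]$ with pointwise order and operations ($\infty+x=\infty$, $0\cdot\infty=0$, $r\cdot\infty=\infty$ for $r>0$); $\mathbb{E}_{\le u}(D)=\{\eta\mid \eta\le u\}$; $\mathbb{O}$ is the constant zero function; for $x\ge y$ in $[0,\infty]$, $x-y$ is the least $z$ with $x=y+z$. $K$ is affine if $K(\alpha\eta_1+(1-\alpha)\eta_2)=\alpha K(\eta_1)+(1-\alpha)K(\eta_2)$ for all $\eta_1,\eta_2$ and $\alpha\in[0,1]$. $(\mathsf{D}K)(\eta)=K(\eta)-K(\mathbb{O})$. A $u$-ranking supermartingale with respect to $\mathsf{D}K$ is a function $r\colon D\to[0,\infty)$ with $(\mathsf{D}K)(r)+u\le r$. *)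

(* Defs.v *)
(* [0,oo] is modelled by the nonnegative elements of \bar R. *)
From mathcomp Require Import all_boot all_order all_algebra.
From mathcomp Require Import all_classical all_reals.
From mathcomp Require Import ereal.
Set Implicit Arguments. Unset Strict Implicit. Unset Printing Implicit Defensive.
Import Order.TTheory GRing.Theory Num.Theory.
Local Open Scope ring_scope.
Local Open Scope ereal_scope.

Definition ext (R : realType) (D : Type) := D -> \bar R.
Definition isE (R : realType) (D : Type) (f : ext R D) : Prop :=
  forall x, 0 <= f x.

Definition ele (R : realType) (D : Type) (f g : ext R D) : Prop :=
  forall x, f x <= g x.

Definition ezero (R : realType) (D : Type) : ext R D := fun _ => 0.

(* x - y in [0,oo]: for x >= y the least z with x = y + z.
   If y = +oo this is 0; otherwise (y finite) it is x - y.
   (Truncated at 0 for x < y, a case that never arises below.) *)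
Definition esubE (R : realType) (x y : \bar R) : \bar R :=
  if y == +oo then 0 else maxe (x - y) 0.

Definition affine (R : realType) (D : Type) (K : ext R D -> ext R D) : Prop :=
  forall (eta1 eta2 : ext R D) (a : R), isE eta1 -> isE eta2 ->
    (0 <= a)%R -> (a <= 1)%R ->
    K (fun x => a%:E * eta1 x + (1 - a)%:E * eta2 x) =
    (fun x => a%:E * K eta1 x + (1 - a)%:E * K eta2 x).

Definition DK (R : realType) (D : Type) (K : ext R D -> ext R D) (eta : ext R D)
  : ext R D := fun x => esubE (K eta x) (K (@ezero R D) x).

Definition ranking_supermartingale (R : realType) (D : Type)
  (K : ext R D -> ext R D) (u r : D -> R) : Prop :=
  (forall x, (0 <= r x)%R) /\
  forall x, DK K (fun y => (r y)%:E) x + (u x)%:E <= (r x)%:E.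

(* Main.v *)
Require Import Defs.
From mathcomp Require Import all_boot all_order all_algebra.
From mathcomp Require Import all_classical all_reals.
From mathcomp Require Import ereal.
From mathcomp Require Import ring lra.
Import Order.TTheory GRing.Theory Num.Theory.
Local Open Scope ring_scope.
Local Open Scope ereal_scope.
Lemma h3 (R : realType) (X Y : \bar R) (k : R) : 0 <= X -> X + k%:E <= Y + k%:E -> X <= Y.
Proof.
case: X => [x| |]; case: Y => [y| |] //=; rewrite ?lee_fin ?leey ?leNye //.
move=> _ H; lra.
Qed.
Lemma h4 (R : realType) (a : R) : (0 < a)%R -> a%:E * +oo = +oo.
Proof. move=> ha. by rewrite muleC gt0_mulye ?lte_fin. Qed.
Lemma h1 (R : realType) (X : \bar R) c k : X + k%:E = c%:E -> X = (c - k)%:E.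
Proof. case: X => [x| |] //= H. case: H => <-. congr EFin. ring. Qed.
Lemma h2 (R : realType) (v : \bar R) (c : R) : 0 <= v -> v <= c%:E -> v = (fine v)%:E.
Proof. case: v => [x| |] //=. Qed.

Lemma half2 (R : realType) (x : R) : (x = 2^-1 * (2 * x) + (1 - 2^-1) * 0)%R.
Proof. lra. Qed.
Lemma half0 (R : realType) : (0 <= (2^-1 : R))%R. Proof. lra. Qed.
Lemma half1 (R : realType) : ((2^-1 : R) <= 1)%R. Proof. lra. Qed.
Lemma halfp (R : realType) : (0 < 1 - (2^-1 : R))%R. Proof. lra. Qed.
Lemma twice_ge0 (R : realType) (x : R) : (0 <= x)%R -> (0 <= 2 * x)%R. Proof. lra. Qed.
Lemma half_sum (R : realType) (x y : R) : (x + y = 2^-1 * (2 * x) + (1 - 2^-1) * (2 * y))%R.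
Proof. lra. Qed.
Lemma half_k (R : realType) (k : R) : (2^-1 * k + (1 - 2^-1) * k = k)%R.
Proof. lra. Qed.
Lemma one_half (R : realType) : (1 - 2^-1 = 2^-1 :> R)%R.
Proof. lra. Qed.
Lemma half_k2 (R : realType) (k : R) : (2^-1 * k + 2^-1 * k = k)%R.
Proof. lra. Qed.
Lemma pick_a (R : realType) (k v : R) : (0 <= v)%R -> (v < k)%R ->
  exists a : R, (0 < a)%R /\ (a <= 1)%R /\ (v < (1 - a) * k)%R.
Proof.
move=> v0 vk.
have k0 : (0 < k)%R by apply: le_lt_trans vk.
have k2 : (0 < 2 * k)%R by rewrite mulr_gt0.
exists ((k - v) / (2 * k))%R.
have e : ((k - v) / (2 * k) * (2 * k) = k - v)%R by rewrite divfK // gt_eqF.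
split; first by rewrite divr_gt0 // subr_gt0.
split; first by rewrite ler_pdivrMr // mul1r; lra.
have -> : ((1 - (k - v) / (2 * k)) * k = k - ((k - v) / (2 * k) * (2 * k)) / 2)%R.
  by field; rewrite gt_eqF.
rewrite e; lra.
Qed.
Lemma divK_a (R : realType) (a x : R) : (0 < a)%R -> (x = a * (x / a) + (1 - a) * 0)%R.
Proof. move=> ha; rewrite mulr0 addr0 mulrC divfK // gt_eqF //. Qed.
Lemma pos_contra (R : realType) (v a w k : R) : (0 < a)%R -> (0 <= w)%R -> (v < (1 - a) * k)%R ->
  (v = a * w + (1 - a) * k)%R -> False.
Proof. move=> ha hw hv e. have : (0 <= a * w)%R by rewrite mulr_ge0 // ltW. lra. Qed.
Lemma addsub (R : realType) (a b : R) : (a + (b - a) = b)%R.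
Proof. lra. Qed.
Lemma sub_le (R : realType) (a b c : R) : (0 <= a)%R -> (b <= c)%R -> (b - a <= c)%R.
Proof. lra. Qed.
Lemma kd_eq (R : realType) (e2 k0 eta kd : R) : (e2 + k0 = eta + kd)%R -> (kd = k0 + (e2 - eta))%R.
Proof. lra. Qed.
Lemma step_eq (R : realType) (k0 nd d : R) : (k0 + nd + (k0 + d) - k0 = k0 + (nd + d))%R.
Proof. lra. Qed.
Lemma step_le (R : realType) (k0 nd d kr u r : R) : (k0 + nd <= kr)%R -> (kr - k0 + u <= r)%R ->
  (d <= u)%R -> (nd + d <= r)%R.
Proof. lra. Qed.
Lemma natS_mul (R : realType) (n : nat) (d : R) : (n%:R * d + d = n.+1%:R * d)%R.
Proof. by rewrite -addn1 natrD mulrDl mul1r. Qed.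

Theorem corollary3p7 (R : realType) (D : Type) (K : ext R D -> ext R D)
  (u : D -> R)
  (HKE : forall eta : ext R D, isE eta -> isE (K eta))
  (Haff : affine K)
  (Hu : forall x, (0 <= u x)%R)
  (Hpre : ele (K (fun x => (u x)%:E)) (fun x => (u x)%:E))
  (Hrsm : exists r : D -> R, ranking_supermartingale K u r) :
  exists! eta : ext R D,
    (isE eta /\ ele eta (fun x => (u x)%:E)) /\ K eta = eta.
Proof.
pose EF := fun p : D -> R => (fun x => (p x)%:E) : ext R D.
pose Z := EF (fun _ => 0%R).
have isEF : forall p : D -> R, (forall y, 0 <= p y)%R -> isE (EF p).
  by move=> p hp y; rewrite /EF lee_fin.
have hA : forall (p q : D -> R) (a : R), (forall y, 0 <= p y)%R -> (forall y, 0 <= q y)%R ->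
   (0 <= a)%R -> (a <= 1)%R -> forall x,
   K (EF (fun y => a * p y + (1 - a) * q y)%R) x = a%:E * K (EF p) x + (1 - a)%:E * K (EF q) x.
  move=> p q a hp hq ha0 ha1 x.
  have := Haff (EF p) (EF q) a (isEF p hp) (isEF q hq) ha0 ha1.
  move=> /(congr1 (fun f => f x)) /= <-.
  congr (K _ x); apply: funext => y; by rewrite /EF EFinD !EFinM.
have KE0 : forall p : D -> R, (forall y, 0 <= p y)%R -> forall x, 0 <= K (EF p) x.
  by move=> p hp; apply: HKE; apply: isEF.
have hhalf0 := half0 R.
have hhalf1 := half1 R.
have hz : forall y : D, (0 <= (0 : R))%R by move=> y.
have hk0' : forall x, K Z x = (fine (K Z x))%:E.
  move=> x.
  have e : EF u = EF (fun y => 2^-1 * (2 * u y) + (1 - 2^-1) * 0)%R.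
    by apply: funext => y; rewrite /EF -half2.
  have H0 : K (EF u) x <= (u x)%:E := Hpre x.
  have h2u : forall y, (0 <= 2 * u y)%R by move=> y; apply: twice_ge0.
  move: H0; rewrite e (hA (fun y : D => (2 * u y)%R) (fun _ : D => 0%R) (2^-1)%R) //.
  move=> H.
  have H' : (1 - 2^-1)%:E * K Z x <= (u x)%:E.
    apply: le_trans H; apply: leeDr; apply: mule_ge0; first by rewrite lee_fin.
    exact: KE0.
  move: H' (KE0 _ hz x); case: (K Z x) => [z| |] //.
  by rewrite h4 ?halfp.
pose k0 := fun x => fine (K Z x).
have hk0 : forall x, K Z x = (k0 x)%:E by exact: hk0'.
have hAdd : forall p q : D -> R, (forall y, 0 <= p y)%R -> (forall y, 0 <= q y)%R ->
    forall x, K (EF (fun y => p y + q y)%R) x + (k0 x)%:E = K (EF p) x + K (EF q) x.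
  move=> p q hp hq x.
  have hp2 : forall y, (0 <= 2 * p y)%R by move=> y; apply: twice_ge0.
  have hq2 : forall y, (0 <= 2 * q y)%R by move=> y; apply: twice_ge0.
  have e1 : EF (fun y => p y + q y)%R = EF (fun y => 2^-1 * (2 * p y) + (1 - 2^-1) * (2 * q y))%R.
    by apply: funext => y; rewrite /EF -half_sum.
  have e2 : EF p = EF (fun y => 2^-1 * (2 * p y) + (1 - 2^-1) * 0)%R.
    by apply: funext => y; rewrite /EF -half2.
  have e3 : EF q = EF (fun y => 2^-1 * (2 * q y) + (1 - 2^-1) * 0)%R.
    by apply: funext => y; rewrite /EF -half2.
  rewrite e1 (hA (fun y : D => (2 * p y)%R) (fun y : D => (2 * q y)%R) (2^-1)%R) //.
  rewrite e2 (hA (fun y : D => (2 * p y)%R) (fun _ : D => 0%R) (2^-1)%R) //.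
  rewrite e3 (hA (fun y : D => (2 * q y)%R) (fun _ : D => 0%R) (2^-1)%R) //.
  rewrite -/Z hk0 !one_half addrACA; congr (_ + _).
  by rewrite -!EFinM -EFinD half_k2.
have hPos : forall p : D -> R, (forall y, 0 <= p y)%R -> forall x, (k0 x)%:E <= K (EF p) x.
  move=> p hp x.
  have := KE0 p hp x.
  case E: (K (EF p) x) => [v| |] //; last by move=> _; rewrite leey.
  rewrite !lee_fin => v0.
  rewrite leNgt; apply/negP => hlt.
  have [a [ha0 [ha1 hva]]] := @pick_a R _ _ v0 hlt.
  have hq : forall y, (0 <= p y / a)%R by move=> y; rewrite divr_ge0 // ltW.
  have e : EF p = EF (fun y => a * (p y / a) + (1 - a) * 0)%R.
    by apply: funext => y; rewrite /EF -divK_a.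
  move: E; rewrite e (hA (fun y : D => (p y / a)%R) (fun _ : D => 0%R) a) //; last exact: ltW.
  rewrite -/Z hk0.
  have := KE0 _ hq x.
  case: (K (EF (fun y => p y / a)%R) x) => [w| |] //.
  - rewrite lee_fin => w0.
    rewrite -!EFinM -EFinD => -[] ev.
    exact: (@pos_contra R _ _ _ _ ha0 w0 hva (esym ev)).
  - by rewrite h4.
have hMono : forall p q : D -> R, (forall y, 0 <= p y)%R -> (forall y, p y <= q y)%R ->
    forall x, K (EF p) x <= K (EF q) x.
  move=> p q hp hpq x.
  have hqp : forall y, (0 <= q y - p y)%R by move=> y; rewrite subr_ge0.
  have e : EF q = EF (fun y => p y + (q y - p y))%R.
    by apply: funext => y; rewrite /EF addsub.
  apply: (@h3 _ _ _ (k0 x)); first exact: KE0.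
  rewrite e hAdd //; apply: leeD2l; exact: hPos.
have hFin : forall p : D -> R, (forall y, 0 <= p y)%R -> (forall y, p y <= u y)%R ->
    forall x, K (EF p) x = (fine (K (EF p) x))%:E.
  move=> p hp hpu x.
  apply: (@h2 _ _ (u x)); first exact: KE0.
  apply: le_trans (Hpre x); exact: hMono.
pose S := fun p : D -> R => (forall y, 0 <= p y)%R /\ (forall y, p y <= u y)%R /\
  (forall y, K (EF p) y <= (p y)%:E).
have uS : S u by split; [exact: Hu | split; [by [] | exact: Hpre]].
pose eta := fun x => inf ((fun p : D -> R => p x) @` S)%classic.
have hne : forall x, nonempty ((fun p : D -> R => p x) @` S)%classic.
  by move=> x; exists (u x); exists u.
have hlb0 : forall x, lbound ((fun p : D -> R => p x) @` S)%classic 0%R.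
  by move=> x _ [p [hp _] <-]; exact: hp.
have heta_le : forall p, S p -> forall x, (eta x <= p x)%R.
  move=> p Sp x; apply: (ge_inf (ex_intro _ 0%R (hlb0 x))).
  by exists p.
have heta0 : forall x, (0 <= eta x)%R by move=> x; exact: lb_le_inf.
have hetau : forall x, (eta x <= u x)%R by exact: heta_le.
pose ke := fun x => fine (K (EF eta) x).
have hke : forall x, K (EF eta) x = (ke x)%:E by exact: hFin.
have hke_le : forall x, (ke x <= eta x)%R.
  move=> x; apply: lb_le_inf => // _ [p Sp <-].
  rewrite -lee_fin -hke; apply: le_trans (proj2 (proj2 Sp) x).
  by apply: hMono => // y; apply: heta_le.
have hke0 : forall x, (0 <= ke x)%R.
  by move=> x; rewrite -lee_fin -hke; exact: KE0.
have Ske : S ke.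
  split; first exact: hke0.
  split; first by move=> y; apply: le_trans (hke_le y) (hetau y).
  move=> y; rewrite -hke; exact: hMono.
have hfixeta : K (EF eta) = EF eta.
  apply: funext => y; rewrite hke /EF; congr EFin.
  by apply: le_anti; rewrite hke_le heta_le.
exists (EF eta); split.
  split; last exact: hfixeta.
  by split => y; rewrite /EF lee_fin.
move=> e' [[he0 heu] hfix].
pose e2 := fun y => fine (e' y).
have he2 : forall y, e' y = (e2 y)%:E by move=> y; exact: (@h2 _ _ (u y)).
have EE : e' = EF e2 by apply: funext => y; rewrite he2.
rewrite EE in hfix *.
have he20 : forall y, (0 <= e2 y)%R by move=> y; rewrite -lee_fin -he2.
have he2u : forall y, (e2 y <= u y)%R by move=> y; rewrite -lee_fin -he2.
have Se2 : S e2 by split => //; split => // y; rewrite hfix.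
pose d := fun y => (e2 y - eta y)%R.
have hd0 : forall y, (0 <= d y)%R by move=> y; rewrite subr_ge0; exact: heta_le.
have hdu : forall y, (d y <= u y)%R.
  by move=> y; apply: (@sub_le R _ _ _ (heta0 y)); exact: he2u.
have hKd : forall y, K (EF d) y = (k0 y + d y)%:E.
  move=> y.
  have := hAdd eta d heta0 hd0 y.
  have -> : EF (fun y => eta y + d y)%R = EF e2 by apply: funext => z; rewrite /EF addsub.
  rewrite hfix hfixeta (hFin d hd0 hdu y) /EF -!EFinD => -[] ev.
  by rewrite (@kd_eq R _ _ _ _ ev).
have [r [hr0 hr]] := Hrsm.
have hKr : forall y, exists kr, K (EF r) y = kr%:E /\ (kr - k0 y + u y <= r y)%R.
  move=> y.
  have := hr y; rewrite /DK /esubE.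
  rewrite (_ : K (@ezero R D) = K Z) // hk0.
  have -> : ((k0 y)%:E == +oo) = false by [].
  move=> H.
  have H2 : K (EF r) y - (k0 y)%:E + (u y)%:E <= (r y)%:E.
    by apply: le_trans H; apply: leeD2r; rewrite le_max lexx.
  have := KE0 r hr0 y.
  move: H2; case: (K (EF r) y) => [kr| |] //= H2 _.
  by exists kr; split => //; rewrite -lee_fin !EFinD.
have hind : forall n : nat, (forall y, n%:R * d y <= r y)%R /\
    (forall y, K (EF (fun z => n%:R * d z)%R) y = (k0 y + n%:R * d y)%:E).
  elim => [|n [IH1 IH2]].
    split => y; first by rewrite mul0r; exact: hr0.
    have -> : EF (fun z => 0%:R * d z)%R = Z by apply: funext => z; rewrite /EF mul0r.
    by rewrite hk0 mul0r addr0.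
  have hnd : forall y, (0 <= n%:R * d y)%R by move=> y; rewrite mulr_ge0.
  have eS : EF (fun z => n%:R * d z + d z)%R = EF (fun z => n.+1%:R * d z)%R.
    by apply: funext => z; rewrite /EF natS_mul.
  split => y.
    have [kr [ekr hkr]] := hKr y.
    have := hMono _ _ hnd IH1 y.
    rewrite IH2 ekr lee_fin => hle.
    rewrite -natS_mul; exact: (@step_le R _ _ _ _ _ _ hle hkr (hdu y)).
  have := hAdd _ _ hnd hd0 y.
  rewrite eS IH2 hKd -!EFinD => /h1 ->.
  by rewrite step_eq natS_mul.
have hd : forall y, d y = 0%R.
  move=> y; apply/eqP; rewrite eq_le hd0 andbT leNgt; apply/negP => hpos.
  have hb := archi_boundP (divr_ge0 (hr0 y) (ltW hpos)).
  move: hb; rewrite ltr_pdivrMr // => hb.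
  have := proj1 (hind (Num.Def.archi_bound (r y / d y))) y.
  by rewrite leNgt hb.
apply: funext => y; rewrite /EF; congr EFin.
apply/eqP; rewrite eq_sym -subr_eq0; apply/eqP; exact: hd.
Qed.
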